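(* Let $\mathcal{H}_X$ be a Hilbert space of dimension $d$ and $\mathcal{H}_R$ a reference Hilbert space. Let $U$ be a Haar-random target unitary on $\mathcal{H}_X$. Consider sets of training inputs $S_{\mathrm{in}}=\{|\psi_{\max}\rangle,|\psi_2\rangle,\dots,|\psi_t\rangle\}\subset\mathcal{H}_X\otimes\mathcal{H}_R$ where $|\psi_{\max}\rangle$ has Schmidt decomposition $|\psi_{\max}\rangle=\sum_{k=1}^{r_{\max}}\sqrt{c_k}\,|\xi_k\rangle_X|\zeta_k\rangle_R$ (with $r_{\max}$ the maximal Schmidt rank among the inputs), and every other input satisfies $|\psi_j\rangle\in\mathcal{H}_{S_{X,\max}}\otimes\mathcal{H}_R$, where $\mathcal{H}_{S_{X,\max}}=\mathrm{span}\{|\xi_1\rangle,\dots,|\xi_{r_{\max}}\rangle\}$. Let $T_t^{\mathrm{ld}}$ be the set of all such input sets, and let $V_S$ be a hypothesis unitary on $\mathcal{H}_X$ perfectly trained on the corresponding training set $S=\{(|\psi_j\rangle,(U\otimes I)|\psi_j\rangle)\}$. Then, with $\mathbb{E}_S^{\mathrm{ld}}$ denoting the expectation over $T_t^{\mathrm{ld}}$, $$\mathbb{E}_U\big[\mathbb{E}_S^{\mathrm{ld}}[R_U(V_S)]\big]\;\ge\;1-\frac{r_{\max}^2+d+1}{d(d+1)}.$$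
   Context: Perfect training means $|\langle\psi_j|(U^\dagger V_S\otimes I)|\psi_j\rangle|=1$ for all training inputs. The risk is $R_U(V)=\int\big(1-|\langle x|U^\dagger V|x\rangle|^2\big)\,dx$ over Haar-random pure states $|x\rangle\in\mathcal{H}_X$, equivalently $R_U(V)=1-\frac{d+|\mathrm{Tr}[U^\dagger V]|^2}{d(d+1)}$. $\mathbb{E}_U$ is over the Haar measure on $\mathcal{U}(d)$; $\mathbb{E}_S^{\mathrm{ld}}$ is over the normalized restriction of the product Fubini–Study measure to $T_t^{\mathrm{ld}}$. *)

(* Defs.v *)
From HB Require Import structures.
From mathcomp Require Import all_boot all_order all_algebra.
From mathcomp Require Import all_classical all_reals all_analysis.
From mathcomp Require Export complex.
Set Implicit Arguments.
Unset Strict Implicit.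
Unset Printing Implicit Defensive.
Import Order.TTheory GRing.Theory Num.Theory.
Local Open Scope ring_scope.
Local Open Scope classical_set_scope.

Section QDefs.
Variable R : realType.
Local Notation C := R[i].
Local Open Scope complex_scope.

(* complex matrices (d x n); a vector of H_X (x) H_R, with dim H_X = d and
   dim H_R = n, is represented as a d x n matrix psi, so that
   (A (x) I) psi = A *m psi, and |xi>_X |zeta>_R = xi *m zeta^T *)
Definition cmx (m n : nat) := 'M[C]_(m, n).
HB.instance Definition _ m n := Choice.on (cmx m n).
HB.instance Definition _ m n := isPointed.Build (cmx m n) (0 : 'M[C]_(m, n)).

Definition cmx_gen m n : set (set (cmx m n)) :=
  [set A | exists (i : 'I_m) (j : 'I_n) (B : set R), measurable B /\
     (A = (fun M : cmx m n => complex.Re (M i j)) @^-1` B \/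
      A = (fun M : cmx m n => complex.Im (M i j)) @^-1` B)].
Definition cmxT m n := g_sigma_algebraType (@cmx_gen m n).

Definition ctuple (t m n : nat) := {ffun 'I_t -> 'M[C]_(m, n)}.
HB.instance Definition _ t m n := Choice.on (ctuple t m n).
HB.instance Definition _ t m n :=
  isPointed.Build (ctuple t m n) [ffun _ => (0 : 'M[C]_(m, n))].
Definition ctuple_gen t m n : set (set (ctuple t m n)) :=
  [set A | exists (k : 'I_t) (i : 'I_m) (j : 'I_n) (B : set R), measurable B /\
     (A = (fun S : ctuple t m n => complex.Re (S k i j)) @^-1` B \/
      A = (fun S : ctuple t m n => complex.Im (S k i j)) @^-1` B)].
Definition ctupleT t m n := g_sigma_algebraType (@ctuple_gen t m n).

Definition adj m n (M : 'M[C]_(m, n)) : 'M[C]_(n, m) := (map_mx conjc M)^T.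

Definition inner m n (psi phi : 'M[C]_(m, n)) : C := \tr (adj psi *m phi).

Definition unitary d (U : 'M[C]_d) := adj U *m U = 1%:M.

Definition unit_state m n (psi : 'M[C]_(m, n)) := inner psi psi = 1.

Definition orthonormal m r (xi : 'I_r -> 'cV[C]_m) :=
  forall k l, (adj (xi k) *m xi l) ord0 ord0 = (k == l)%:R.

Definition schmidt_decomp m n (psi : 'M[C]_(m, n)) r (c : 'I_r -> R)
  (xi : 'I_r -> 'cV[C]_m) (zeta : 'I_r -> 'cV[C]_n) :=
  [/\ forall k, 0 < c k, orthonormal xi, orthonormal zeta &
      psi = \sum_(k < r) (Num.sqrt (c k))%:C *: (xi k *m (zeta k)^T)].

Definition in_span_tensor m n r (xi : 'I_r -> 'cV[C]_m) (psi : 'M[C]_(m, n)) :=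
  exists a : 'I_r -> 'rV[C]_n, psi = \sum_(k < r) xi k *m a k.

Definition in_Tld d n t rmax (S : ctuple t d n) :=
  (forall j, unit_state (S j)) /\
  exists (i0 : 'I_t) (c : 'I_rmax -> R) (xi : 'I_rmax -> 'cV[C]_d)
         (zeta : 'I_rmax -> 'cV[C]_n),
    schmidt_decomp (S i0) c xi zeta /\ forall j, in_span_tensor xi (S j).

Definition perfectly_trained d n t (U V : 'M[C]_d) (S : ctuple t d n) :=
  forall j, ComplexField.Normc.normc (inner (S j) ((adj U *m V) *m S j)) = 1.

Definition risk d (U V : 'M[C]_d) : R :=
  1 - (d%:R + ComplexField.Normc.normc (\tr (adj U *m V)) ^+ 2) / (d%:R * (d%:R + 1)).

Definition is_haar d (mu : probability (cmxT d d) R) :=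
  [/\ {ae mu, forall U : cmxT d d, unitary U},
      forall W : 'M[C]_d, unitary W -> forall A : set (cmxT d d),
        measurable A -> mu ((fun U : cmxT d d => W *m U) @^-1` A) = mu A &
      forall W : 'M[C]_d, unitary W -> forall A : set (cmxT d d),
        measurable A -> mu ((fun U : cmxT d d => U *m W) @^-1` A) = mu A].

End QDefs.

(* Main.v *)
Require Import Defs.
From HB Require Import structures.
From mathcomp Require Import all_boot all_order all_algebra.
From mathcomp Require Import all_classical all_reals all_analysis.
From mathcomp Require Import complex spectral measurable_realfun.
Import Order.TTheory GRing.Theory Num.Theory.
Local Open Scope ring_scope.
Local Open Scope classical_set_scope.
From mathcomp Require Import lra.
Set Implicit Arguments. Unset Strict Implicit. Unset Printing Implicit Defensive.
Section Alg.
Local Open Scope sesquilinear_scope.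
Variable C : numClosedFieldType.

Definition flipf n (i : 'I_n) (s : {ffun 'I_n -> bool}) : {ffun 'I_n -> bool} :=
  [ffun j => if j == i then ~~ s j else s j].

Lemma flipfK n (i : 'I_n) : involutive (flipf i).
Proof. by move=> s; apply/ffunP=> j; rewrite !ffunE; case: eqP => // _; rewrite negbK. Qed.

Lemma sum_flip0 n (i : 'I_n) (F : {ffun 'I_n -> bool} -> C) :
  (forall s, F (flipf i s) = - F s) -> \sum_s F s = 0.
Proof.
move=> HF.
have H : \sum_s F s = - \sum_s F s.
  rewrite {1}(reindex_inj (inv_inj (@flipfK n i))) /= -sumrN.
  by apply: eq_bigr => s _; rewrite HF.
have : (\sum_s F s) *+ 2 = 0 by rewrite mulr2n {1}H addNr.
by move/eqP; rewrite mulrn_eq0 /= => /eqP.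
Qed.

Definition sgn (b : bool) : C := (-1) ^+ b.

Lemma sgn_flip n (i j : 'I_n) s : sgn (flipf i s j) = if j == i then - sgn (s j) else sgn (s j).
Proof. by rewrite /sgn ffunE; case: eqP => // _; case: (s j); rewrite /= ?expr0 ?expr1 ?opprK. Qed.

Lemma sgn_sqr b : sgn b * sgn b = 1.
Proof. by rewrite /sgn -signr_addb addbb expr0. Qed.

Lemma sgn_conj b : (sgn b)^* = sgn b.
Proof. by case: b; rewrite /sgn ?expr0 ?expr1 ?rmorphN ?rmorph1 //. Qed.

Lemma sum_sgn n (i : 'I_n) : \sum_(s : {ffun 'I_n -> bool}) sgn (s i) = 0.
Proof. by apply: (@sum_flip0 n i) => s; rewrite sgn_flip eqxx. Qed.

Lemma sum_sgn2 n (i j : 'I_n) :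
  \sum_(s : {ffun 'I_n -> bool}) (sgn (s i) * sgn (s j)) = (i == j)%:R * (2 ^ n)%:R.
Proof.
have [<-|ij] := eqVneq i j.
  under eq_bigr do rewrite sgn_sqr.
  by rewrite sumr_const card_ffun card_bool card_ord mul1r.
rewrite mul0r; apply: (@sum_flip0 n i) => s.
by rewrite !sgn_flip eqxx eq_sym (negbTE ij) mulNr.
Qed.
Lemma sign_avg n (c : C) (b : 'I_n -> C) :
  \sum_(s : {ffun 'I_n -> bool}) `|c + \sum_i sgn (s i) * b i| ^+ 2
  = (2 ^ n)%:R * (`|c| ^+ 2 + \sum_i `|b i| ^+ 2).
Proof.
have E s : `|c + \sum_i sgn (s i) * b i| ^+ 2 =
    c * c^* + c * (\sum_j sgn (s j) * (b j)^*) + (\sum_i sgn (s i) * b i) * c^*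
    + \sum_i \sum_j (b i * (b j)^*) * (sgn (s i) * sgn (s j)).
  rewrite normCK rmorphD rmorph_sum /= mulrDl !mulrDr !addrA; congr (_ + _ + _ + _).
  - by congr (_ * _); apply: eq_bigr => j _; rewrite rmorphM /= sgn_conj.
  - rewrite mulr_suml; apply: eq_bigr => i _; rewrite mulr_sumr; apply: eq_bigr => j _.
    by rewrite rmorphM /= sgn_conj mulrACA mulrC.
under eq_bigr do rewrite E.
rewrite !big_split /= sumr_const card_ffun card_bool card_ord.
have H1 : \sum_(s : {ffun 'I_n -> bool}) c * (\sum_j sgn (s j) * (b j)^*) = 0.
  rewrite -mulr_sumr exchange_big /= big1 ?mulr0 // => j _.
  by rewrite -mulr_suml sum_sgn mul0r.
have H2 : \sum_(s : {ffun 'I_n -> bool}) (\sum_i sgn (s i) * b i) * c^* = 0.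
  rewrite -mulr_suml exchange_big /= big1 ?mul0r // => j _.
  by rewrite -mulr_suml sum_sgn mul0r.
rewrite H1 H2 addr0 addr0.
rewrite exchange_big /=.
under eq_bigr => i _ do rewrite exchange_big /=.
under eq_bigr => i _ do under eq_bigr => j _ do rewrite -mulr_sumr sum_sgn2.
rewrite normCK mulrDr mulr_natl; congr (_ + _).
rewrite mulr_sumr; apply: eq_bigr => i _.
rewrite (bigD1 i) //= big1 ?addr0.
  by rewrite eqxx mul1r normCK mulrC.
by move=> j; rewrite eq_sym => /negbTE ->; rewrite mul0r mulr0.
Qed.

Definition shiftY n (p : {ffun 'I_n.+1 -> bool} * 'I_n.+1) : 'M[C]_n.+1 :=
  \matrix_(i, j) (if i == j + p.2 then sgn (p.1 i) else 0).

Lemma shiftY_unitary n (p : {ffun 'I_n.+1 -> bool} * 'I_n.+1) : (shiftY p) ^t* *m shiftY p = 1%:M.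
Proof.
apply/matrixP=> j k; rewrite !mxE (bigD1 (j + p.2)) //= big1 ?addr0.
  rewrite !mxE eqxx (inj_eq (addIr p.2)) eq_sym.
  by case: eqP => [_|_]; rewrite ?sgn_conj ?sgn_sqr ?mulr0.
by move=> i /negbTE Hi; rewrite !mxE Hi rmorph0 mul0r.
Qed.

Lemma shiftY_tr n (p : {ffun 'I_n.+1 -> bool} * 'I_n.+1) (B : 'M[C]_n.+1) :
  \tr ((shiftY p) ^t* *m B) = \sum_k sgn (p.1 k) * B k (k - p.2).
Proof.
rewrite /mxtrace [RHS](reindex_inj (addIr p.2)) /=.
apply: eq_bigr => j _; rewrite addrK !mxE (bigD1 (j + p.2)) //= big1 ?addr0.
  by rewrite !mxE eqxx sgn_conj.
by move=> i /negbTE Hi; rewrite !mxE Hi rmorph0 mul0r.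
Qed.

Lemma avg_exists m : exists (I : finType) (Y : I -> 'M[C]_m),
  [/\ (0 < #|I|)%N, (forall i, Y i ^t* *m Y i = 1%:M) &
   forall (c : C) (B : 'M[C]_m), \sum_i `|c + \tr (Y i ^t* *m B)| ^+ 2 =
     #|I|%:R * (`|c| ^+ 2 + (\sum_k \sum_l `|B k l| ^+ 2) / m%:R)].
Proof.
case: m => [|n].
  exists unit, (fun _ => 1%:M); split => //.
  - by rewrite card_unit.
  - by move=> _; apply/matrixP=> [[]].
  move=> c B; rewrite big_ord0 mul0r addr0 card_unit mul1r (bigD1 tt) //= big1 ?addr0; last by case.
  by rewrite /mxtrace big_ord0 addr0.
exists ({ffun 'I_n.+1 -> bool} * 'I_n.+1)%type, (@shiftY n); split.
- by rewrite card_prod card_ffun card_bool !card_ord muln_gt0 expn_gt0.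
- exact: shiftY_unitary.
move=> c B.
under eq_bigr do rewrite shiftY_tr.
rewrite -(pair_bigA _ (fun (s : {ffun 'I_n.+1 -> bool}) (a : 'I_n.+1) => `|c + \sum_k sgn (s k) * B k (k - a)| ^+ 2)) /=.
rewrite exchange_big /=.
under eq_bigr do rewrite sign_avg.
rewrite -mulr_sumr big_split /= sumr_const card_ord.
rewrite card_prod card_ffun card_bool !card_ord natrM -mulrA; congr (_ * _).
rewrite mulrDr [(n.+1)%:R * _]mulrC mulr_natr; congr (_ + _).
rewrite mulrC divfK ?pnatr_eq0 //.
rewrite exchange_big /=; apply: eq_bigr => k _.
rewrite (reindex_inj (inv_inj (subKr k))) /=.
by apply: eq_bigr => l _; rewrite subKr.
Qed.

Lemma tcM m n p (A : 'M[C]_(m, n)) (B : 'M[C]_(n, p)) : (A *m B)^t* = B^t* *m A^t*.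
Proof. by rewrite trmx_mul map_mxM. Qed.

Lemma row_norm1 p (M : 'M[C]_p) (i : 'I_p) : M *m M^t* = 1%:M ->
  \sum_j `|M i j| ^+ 2 = 1.
Proof.
move=> /matrixP/(_ i i); rewrite !mxE eqxx mulr1n => <-.
by apply: eq_bigr => j _; rewrite !mxE normCK.
Qed.

Lemma entry_le1 p (M : 'M[C]_p) (i j : 'I_p) : M *m M^t* = 1%:M -> `|M i j| <= 1.
Proof.
move=> HM; have H := row_norm1 i HM.
have : `|M i j| ^+ 2 <= 1.
  rewrite -H (bigD1 j) //= lerDl sumr_ge0 // => k _; exact: exprn_ge0.
by rewrite expr_le1.
Qed.

Lemma tr_le p (M : 'M[C]_p) : M *m M^t* = 1%:M -> `|\tr M| <= p%:R.
Proof.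
move=> HM; rewrite /mxtrace (le_trans (ler_norm_sum _ _ _)) //.
rewrite -[p in p%:R]card_ord -sumr_const; apply: ler_sum => i _.
exact: entry_le1.
Qed.

Lemma alg_key (d r : nat) (xi : 'I_r -> 'cV[C]_d) :
  exists (I : finType) (W : I -> 'M[C]_d),
  [/\ (0 < #|I|)%N, (forall i, W i ^t* *m W i = 1%:M),
      (forall i k, W i *m xi k = xi k) &
   forall A : 'M[C]_d, A ^t* *m A = 1%:M ->
     \sum_i `|\tr (W i ^t* *m A)| ^+ 2 <= #|I|%:R * ((r ^ 2)%:R + 1)].
Proof.
pose X : 'M[C]_(r, d) := \matrix_(k, j) (xi k j 0)^*.
pose E := schmidt_complete X.
have EU : E *m E^t* = 1%:M by apply/unitarymxP/schmidt_complete_unitarymx.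
pose m := \rank (orthomx Num.Def.conjC (hermitian1mx d) X).
pose r' := \rank X.
have EE : E^t* *m E = 1%:M.
  have : row_full E.
    by rewrite /row_full (mxrank_unitary (schmidt_complete_unitarymx X)) add_rank_ortho.
  move=> /row_fullP [B HB].
  by rewrite -[LHS]mul1mx -HB -mulmxA (mulmxA E) EU mul1mx HB.
have E2X : dsubmx E *m X^t* = 0.
  apply/orthomx1P; rewrite /E /schmidt_complete col_mxKd.
  by rewrite (eqmx_schmidt_free (row_base_free _)) eq_row_base.
have rle : (r' <= r)%N by apply: rank_leq_row.
have := @avg_exists m. case=> I [Y [I0 YU Yavg]].
pose D i : 'M[C]_(r' + m) := block_mx 1%:M 0 0 (Y i).
have DU i : (D i)^t* *m D i = 1%:M.
  rewrite /D tr_block_mx map_block_mx mulmx_block.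
  rewrite !trmx0 !map_mx0 trmx1 map_mx1 !mulmx0 !mul0mx !mulmx1 !addr0 !add0r YU.
  by rewrite scalar_mx_block.
exists I, (fun i => E^t* *m D i *m E); split => //.
- move=> i; rewrite !tcM trmxCK.
  by rewrite -!mulmxA (mulmxA E) EU mul1mx (mulmxA _ (D i)) DU mul1mx EE.
- move=> i k.
  have HX : E^t* *m D i *m E *m X^t* = X^t*.
    rewrite -!mulmxA; have -> : E *m X^t* = col_mx (usubmx E *m X^t*) 0 by rewrite -E2X -mul_col_mx vsubmxK.
    rewrite /D mul_block_col !mulmx0 !mul0mx !addr0 mul1mx -E2X -mul_col_mx vsubmxK.
    by rewrite !mulmxA EE mul1mx.
  have Hxi : xi k = col k (X^t*).
    by apply/matrixP=> a b; rewrite !mxE conjCK; rewrite (ord1 b).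
  by rewrite Hxi !colE mulmxA HX.
move=> A AU.
have AU' : A *m A^t* = 1%:M by apply: mulmx1C.
pose M : 'M[C]_(r' + m) := E *m A *m E^t*.
have MU : M *m M^t* = 1%:M.
  rewrite /M !tcM trmxCK !mulmxA -(mulmxA (E *m A)) EE mulmx1 -(mulmxA E) AU' mulmx1.
  exact: EU.
have Htr i : \tr ((E^t* *m D i *m E)^t* *m A) =
    \tr (ulsubmx M) + \tr ((Y i)^t* *m drsubmx M).
  rewrite !tcM trmxCK -!mulmxA mxtrace_mulC -!mulmxA.
  have -> : E *m (A *m E^t*) = M by rewrite /M mulmxA.
  rewrite -[M in D i ^t* *m M]submxK /D tr_block_mx map_block_mx mulmx_block.
  rewrite !trmx0 !map_mx0 trmx1 map_mx1 !mul0mx !mul1mx !addr0 add0r.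
  by rewrite add0r mxtrace_block.
under eq_bigr do rewrite Htr.
rewrite Yavg ler_wpM2l ?ler0n //; apply: lerD.
  rewrite natrX lerXn2r ?nnegrE ?ler0n //.
  rewrite /mxtrace (le_trans (ler_norm_sum _ _ _)) // (@le_trans _ _ r'%:R) ?ler_nat //.
  rewrite -[r' in r'%:R]card_ord -sumr_const; apply: ler_sum => k _.
  by have := entry_le1 (lshift m k) (lshift m k) MU; rewrite !mxE.
have Hs : \sum_k \sum_l `|drsubmx M k l| ^+ 2 <= m%:R.
  rewrite -[m in m%:R]card_ord -sumr_const; apply: ler_sum => k _.
  rewrite -(row_norm1 (rshift r' k) MU) big_split_ord /=; apply: ler_wpDl.
    by apply: sumr_ge0 => j _; apply: exprn_ge0.
  by apply: ler_sum => l _; rewrite !mxE.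
have [m0|mpos] := eqVneq m 0%N.
  have -> : (m%:R : C) = 0 by rewrite m0.
  by rewrite invr0 mulr0.
by rewrite ler_pdivrMr ?ltr0n ?lt0n // mul1r.
Qed.
End Alg.

Section RC.
Local Open Scope sesquilinear_scope.
Variable R : realType.
Local Notation C := R[i].

Lemma adjE m n (M : 'M[C]_(m,n)) : adj M = M ^t*.
Proof. by apply/matrixP=> i j; rewrite !mxE. Qed.

Lemma normc_ge0 (z : C) : 0 <= ComplexField.Normc.normc z.
Proof. by case: z => a b; apply: sqrtr_ge0. Qed.

Lemma normcC (z : C) : ((ComplexField.Normc.normc z)%:C)%C = `|z|.
Proof. by []. Qed.

Lemma unitaryC d (U : 'M[C]_d) : unitary U -> U *m U^t* = 1%:M.
Proof. by rewrite /unitary adjE => /mulmx1C. Qed.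

Lemma unitaryM d (U V : 'M[C]_d) : unitary U -> unitary V -> unitary (U *m V).
Proof.
rewrite /unitary !adjE => HU HV.
by rewrite tcM -mulmxA (mulmxA _ U) HU mul1mx HV.
Qed.

Lemma risk_ge0 d (U V : 'M[C]_d) : (0 < d)%N -> unitary U -> unitary V -> 0 <= risk U V.
Proof.
move=> d0 HU HV.
have AU : (adj U *m V) *m (adj U *m V)^t* = 1%:M.
  by apply: unitaryC; apply: unitaryM => //; rewrite /unitary !adjE trmxCK; apply: unitaryC.
have := tr_le AU; rewrite -normcC -(rmorph_nat (@complex.real_complex R)) lecR => Hn.
have Hn2 : ComplexField.Normc.normc (\tr (adj U *m V)) ^+ 2 <= d%:R ^+ 2.
  by rewrite lerXn2r ?nnegrE ?ler0n ?normc_ge0.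
rewrite /risk subr_ge0 ler_pdivrMr ?mulr_gt0 ?ltr0n ?addr_gt0 //.
by rewrite mul1r mulrDr mulr1 addrC lerD2r -expr2.
by rewrite ltr0n.
Qed.

Lemma avg_risk d r (I : finType) (W : I -> 'M[C]_d) (U V : 'M[C]_d) : (0 < d)%N ->
  (forall A : 'M[C]_d, A ^t* *m A = 1%:M ->
     \sum_i `|\tr (W i ^t* *m A)| ^+ 2 <= #|I|%:R * ((r ^ 2)%:R + 1)) ->
  unitary U -> unitary V ->
  #|I|%:R * (1 - ((r ^ 2)%:R + d%:R + 1) / (d%:R * (d%:R + 1))) <=
  \sum_i risk (U *m W i) V.
Proof.
move=> d0 Hb HU HV.
pose A := adj U *m V.
have AU : A ^t* *m A = 1%:M.
  rewrite -adjE; apply: unitaryM => //; rewrite /unitary !adjE trmxCK; exact: unitaryC.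
have Hs := Hb A AU.
pose n i := ComplexField.Normc.normc (\tr (adj (U *m W i) *m V)).
have En i : `|\tr (W i ^t* *m A)| = (n i)%:C%C.
  by rewrite normcC /A /n !adjE tcM mulmxA.
have HS : \sum_i n i ^+ 2 <= #|I|%:R * ((r ^ 2)%:R + 1).
  rewrite -lecR rmorph_sum /=.
  under eq_bigr do rewrite rmorphXn /= -En.
  by rewrite rmorphM rmorphD /= !rmorph_nat rmorph1.
have cI : #|(xpredT : pred I)| = #|I| by apply: eq_card.
rewrite /risk big_split /= sumr_const sumrN -mulr_suml big_split /= sumr_const cI.
rewrite (_ : \sum_i _ = \sum_i n i ^+ 2) //.
set N := (#|I|%:R : R). set S := \sum_i n i ^+ 2.
rewrite -mulr_natr -/N mulrBr mulr1 lerD2l lerN2 mulrA ler_wpM2r ?invr_ge0 ?mulr_ge0 ?ler0n ?addr_ge0 //.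
move: HS; rewrite -/N -/S; lra.
Qed.

Lemma ReD (x y : C) : complex.Re (x + y) = complex.Re x + complex.Re y.
Proof. by case: x; case: y. Qed.
Lemma ImD (x y : C) : complex.Im (x + y) = complex.Im x + complex.Im y.
Proof. by case: x; case: y. Qed.
Lemma ReM (x y : C) : complex.Re (x * y) = complex.Re x * complex.Re y - complex.Im x * complex.Im y.
Proof. by case: x => a b; case: y. Qed.
Lemma ImM (x y : C) : complex.Im (x * y) = complex.Re x * complex.Im y + complex.Im x * complex.Re y.
Proof. by case: x => a b; case: y. Qed.
Lemma Re_sum (I : Type) (s : seq I) (F : I -> C) :
  complex.Re (\sum_(i <- s) F i) = \sum_(i <- s) complex.Re (F i).
Proof. exact: (big_morph _ ReD (erefl _)). Qed.
Lemma Im_sum (I : Type) (s : seq I) (F : I -> C) :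
  complex.Im (\sum_(i <- s) F i) = \sum_(i <- s) complex.Im (F i).
Proof. exact: (big_morph _ ImD (erefl _)). Qed.

Lemma mRe m n (i : 'I_m) (j : 'I_n) :
  measurable_fun [set: cmxT R m n] (fun M : cmxT R m n => complex.Re (M i j)).
Proof.
move=> _ B mB; rewrite setTI; apply: sub_sigma_algebra.
by exists i, j, B; split => //; left.
Qed.
Lemma mIm m n (i : 'I_m) (j : 'I_n) :
  measurable_fun [set: cmxT R m n] (fun M : cmxT R m n => complex.Im (M i j)).
Proof.
move=> _ B mB; rewrite setTI; apply: sub_sigma_algebra.
by exists i, j, B; split => //; right.
Qed.

Lemma measurable_mulmxr d (W : 'M[C]_d) :
  measurable_fun [set: cmxT R d d] (fun U : cmxT R d d => (U *m W : cmxT R d d)).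
Proof.
have H1 := (measurability (D := [set: cmxT R d d]) (f := fun U : cmxT R d d => (U *m W : cmxT R d d)) (@cmx_gen R d d)). apply: H1 => //.
move=> _ [A [i [j [B [mB HA]]]] <-]; rewrite setTI.
have mRe' : measurable_fun [set: cmxT R d d]
    (fun U : cmxT R d d => complex.Re ((U *m W) i j)).
  have -> : (fun U : cmxT R d d => complex.Re ((U *m W) i j)) =
      (fun U : cmxT R d d => \sum_(k <- index_enum 'I_d)
         (complex.Re (U i k) * complex.Re (W k j) - complex.Im (U i k) * complex.Im (W k j))).
    by apply: funext => U; rewrite mxE Re_sum; apply: eq_bigr => k _; rewrite ReM.
  apply: measurable_sum => k; apply: measurable_realfun.measurable_funB; apply: measurable_realfun.measurable_funM => //;
    by [apply: mRe | apply: mIm].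
have mIm' : measurable_fun [set: cmxT R d d]
    (fun U : cmxT R d d => complex.Im ((U *m W) i j)).
  have -> : (fun U : cmxT R d d => complex.Im ((U *m W) i j)) =
      (fun U : cmxT R d d => \sum_(k <- index_enum 'I_d)
         (complex.Re (U i k) * complex.Im (W k j) + complex.Im (U i k) * complex.Re (W k j))).
    by apply: funext => U; rewrite mxE Im_sum; apply: eq_bigr => k _; rewrite ImM.
  apply: measurable_sum => k; apply: measurable_realfun.measurable_funD; apply: measurable_realfun.measurable_funM => //;
    by [apply: mRe | apply: mIm].
case: HA => ->.
  by rewrite -[X in measurable X]setTI; apply: mRe'.
by rewrite -[X in measurable X]setTI; apply: mIm'.
Qed.
End RC.

Unset Implicit Arguments.

Lemma ae_mono {d} {T : measurableType d} {R : realType} {mu : {measure set T -> \bar R}} {P Q : T -> Prop} :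
  (forall x, P x -> Q x) -> {ae mu, forall x, P x} -> {ae mu, forall x, Q x}.
Proof. move=> PQ; apply: (@filterS _ _ (ae_filter_ringOfSetsType mu)) => x; exact: PQ. Qed.

Theorem mainTheorem3 (R : realType) (d dR t rmax : nat) (hd : (0 < d)%N)
  (mu : probability (cmxT R d d) R) (hmu : is_haar mu)
  (nu : probability (ctupleT R t d dR) R)
  (hnu : {ae nu, forall S : ctupleT R t d dR, in_Tld rmax S})
  (V : ctuple R t d dR -> ctuple R t d dR -> 'M[R[i]]_d)
  (hV : forall (U : 'M[R[i]]_d) (S : ctuple R t d dR),
      unitary U -> in_Tld rmax S ->
      unitary (V S [ffun j => U *m S j]) /\
      perfectly_trained U (V S [ffun j => U *m S j]) S)
  (hmeas : measurable_fun [set: (cmxT R d d * ctupleT R t d dR)%type]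
     (fun p : cmxT R d d * ctupleT R t d dR =>
        risk p.1 (V p.2 [ffun j => p.1 *m p.2 j]))) :
  ((1 - ((rmax ^ 2)%:R + d%:R + 1) / (d%:R * (d%:R + 1)))%:E <=
   \int[mu]_U
     \int[nu]_S (risk U (V S [ffun j => U *m S j]))%:E)%E.
Proof.
set c := 1 - _.
pose f := fun p : cmxT R d d * ctupleT R t d dR =>
        risk p.1 (V p.2 [ffun j => p.1 *m p.2 j]).
pose H := fun p : cmxT R d d * ctupleT R t d dR => (Num.max (f p) 0)%:E.
have mF : measurable_fun [set: cmxT R d d * ctupleT R t d dR] (fun p => ((f p)%:E : \bar R)) by apply/measurable_EFinP.
have mH : measurable_fun [set: cmxT R d d * ctupleT R t d dR] H.
  apply/measurable_EFinP; apply: measurable_realfun.measurable_maxr => //.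
have H0 p : (0 <= H p)%E by rewrite lee_fin le_max lexx orbT.
have [hU hL hR] := hmu.
have EA : (\int[mu]_U \int[nu]_S (risk U (V S [ffun j => U *m S j]))%:E =
           \int[mu]_U \int[nu]_S H (U, S))%E.
  apply: ae_eq_integral => //.
  - have mFp : measurable_fun [set: cmxT R d d * ctupleT R t d dR]
        (fun p => maxe (f p)%:E 0).
      have := measurable_funepos mF; congr measurable_fun.
      by apply: boolp.funext => p; rewrite funeposE.
    have mFn : measurable_fun [set: cmxT R d d * ctupleT R t d dR]
        (fun p => maxe (- (f p)%:E)%E 0).
      have := measurable_funeneg mF; congr measurable_fun.
      by apply: boolp.funext => p; rewrite funenegE.
    have -> : (fun U : cmxT R d d => \int[nu]_S (risk U (V S [ffun j => U *m S j]))%:E)%E =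
        (fun U : cmxT R d d => \int[nu]_S maxe (f (U, S))%:E 0 -
                               \int[nu]_S maxe (- (f (U, S))%:E)%E 0)%E.
      apply: boolp.funext => U; rewrite integralE; congr (_ - _)%E.
        by apply: eq_integral => S _; rewrite funeposE.
      by apply: eq_integral => S _; rewrite funenegE.
    apply: emeasurable_funB.
      apply: (measurable_fun_fubini_tonelli_F _ mFp) => p.
      by rewrite le_max lexx orbT.
    apply: (measurable_fun_fubini_tonelli_F _ mFn) => p.
    by rewrite le_max lexx orbT.
  - exact: (measurable_fun_fubini_tonelli_F H mH H0).
  apply: (ae_mono _ hU) => U Uu _.
  apply: ae_eq_integral => //.
  - exact: (measurable_fun_pair2 U mF).
  - exact: (measurable_fun_pair2 U mH).
  apply: (ae_mono _ hnu) => S HS _.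
  rewrite /H /f /= max_l //.
  by apply: risk_ge0 => //; case: (hV U S Uu HS).
rewrite EA (fubini_tonelli H mH H0).
have [c0|c0] := lerP c 0.
  apply: (@le_trans _ _ 0%E); first by rewrite lee_fin.
  by apply: integral_ge0 => S _; apply: integral_ge0 => U _.
have key : forall S : ctupleT R t d dR, in_Tld rmax S ->
    (c%:E <= \int[mu]_U H (U, S))%E.
  move=> S HS.
  have [Hunit [i0 [cc [xi [zeta [Hsd Hspan]]]]]] := HS.
  have := alg_key xi; case=> I [W [I0 WU Wxi Wb]].
  have WS i j : W i *m S j = S j.
    have [a ->] := Hspan j; rewrite mulmx_sumr; apply: eq_bigr => k _.
    by rewrite mulmxA Wxi.
  have Wu i : unitary (W i) by rewrite /unitary adjE WU.
  have Hf i (U : 'M[R[i]]_d) : [ffun j => (U *m W i) *m S j] = [ffun j => U *m S j].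
    by apply/ffunP => j; rewrite !ffunE -mulmxA WS.
  have mHS : measurable_fun [set: cmxT R d d] (fun U : cmxT R d d => H (U, S)).
    exact: (measurable_fun_pair1 S mH).
  have mHi i : measurable_fun [set: cmxT R d d] (fun U : cmxT R d d => H (U *m W i, S)).
    apply: (measurableT_comp (f := H) (g := fun U : cmxT R d d => ((U *m W i : cmxT R d d), S))) => //.
    apply: measurable_fun_pair; [exact: measurable_mulmxr | exact: measurable_cst].
  have inv i : (\int[mu]_U H (U *m W i, S) = \int[mu]_U H (U, S))%E.
    transitivity (\int[pushforward mu (fun U : cmxT R d d => (U *m W i : cmxT R d d))]_U H (U, S))%E.
      rewrite (ge0_integral_pushforward (measurable_mulmxr (W i))) //.
    apply: eq_measure_integral; first exact: measurable_mulmxr.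
    move=> ? A mA _; exact: (hR (W i) (Wu i) A mA).
  pose K := (\int[mu]_U H (U, S))%E.
  have HK : ((#|I|%:R * c)%:E <= K *+ #|I|)%E.
    have <- : (\sum_(i <- index_enum I) \int[mu]_U H (U *m W i, S) = K *+ #|I|)%E.
      under eq_bigr do rewrite inv.
      by rewrite sumr_const; congr (_ *+ _); apply: eq_card.
    rewrite -(ge0_integral_sum mu measurableT mHi (fun i U _ => H0 _)).
    rewrite -[_%:E]mule1 -(probability_setT mu) -integral_cst //.
    apply: ae_ge0_le_integral => //.
    - by move=> U _; rewrite lee_fin mulr_ge0 // ltW.
    - by move=> U _; apply: sume_ge0 => i _; apply: H0.
    - by apply: emeasurable_sum => i; apply: mHi.
    apply: (ae_mono _ hU) => U Uu _.
    apply: (@le_trans _ _ (\sum_(i <- index_enum I) (f (U *m W i, S))%:E)%E).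
      rewrite sumEFin lee_fin /f /=.
      under eq_bigr do rewrite Hf.
      apply: avg_risk => //.
      by case: (hV U S Uu HS).
    by apply: lee_sum => i _; rewrite /H lee_fin le_max lexx.
  have K0 : (0 <= K)%E by apply: integral_ge0 => U _.
  rewrite -/K; move: K K0 HK => [k| |] K0 HK; last by [].
    move: HK; rewrite -EFin_natmul !lee_fin -[k *+ _]mulr_natr [k * _]mulrC.
    by rewrite ler_pM2l // ltr0n.
  by rewrite leey.
rewrite -[c%:E]mule1 -(probability_setT nu) -integral_cst //.
apply: ae_ge0_le_integral => //.
- by move=> S _; rewrite lee_fin ltW.
- by move=> S _; apply: integral_ge0 => U _.
- exact: (measurable_fun_fubini_tonelli_G H mH H0).
by apply: (ae_mono _ hnu) => S HS _; apply: key.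
Qed.
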